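(* In the setting below, the map $\phi:\bigoplus_{i=1}^nF_i\to H_1(\Gamma,\rho^\beta)$ is equivariant for the natural action of $u_k$ on the target, where $u_k$ acts on the source trivially on $F_i$ for $i\neq k$ and by multiplication by $\chi=\beta^T$ on $F_k$. Moreover $\phi$ is injective.
   Context: Setting: $Q=\{q_1,\ldots,q_n\}\subset\mathbb{P}^1$, $b,c$ further points; $\Gamma=\pi_1(\mathbb{P}^1-Q-\{c\},b)$ with generators $\alpha_i$ (around $q_i$), $\delta$ (around $c$), relation $\delta\alpha_1\cdots\alpha_n=1$; $\delta_1=\delta$, $\delta_{i+1}=\alpha_i\delta_i\alpha_i^{-1}$; $u_k$ acts on $\Gamma$ by $\mu_k$ with $\mu_k(\alpha_i)=\alpha_i$ ($i\ne k$), $\mu_k(\alpha_k)=\delta_k^{-1}\alpha_k\delta_k$, $\mu_k(\delta_k)=\delta_k^{-1}\alpha_k^{-1}\delta_k\alpha_k\delta_k$. $\rho:\Gamma\to GL(V)$ with $\rho(\delta)=1$ and semisimple $\rho(\alpha_i)$; $\beta^{H_i},\beta^T\in\mathbb{C}^*$ with $\beta^T\prod\beta^{H_i}=1$ and $\beta^T\ne1$; $\rho^\beta(\alpha_i)=\beta^{H_i}\rho(\alpha_i)$, $\rho^\beta(\delta)=\beta^T$. $C_1/\partial C_2$: span of $G[\gamma,w]$, linear in $w$, with $G[\xi\gamma,w]=G[\gamma,w]+G[\xi,\rho^\beta(\gamma)w]$; $H_1(\Gamma,\rho^\beta)=\ker(\partial:G[\gamma,w]\mapsto\rho^\beta(\gamma)w-w)$;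 natural action $G[\gamma,w]\mapsto G[\mu_k(\gamma),w]$. $F_i\subset V$ is the space of vectors fixed by $\rho^\beta(\alpha_i)$, and $\phi_i(f)=G[\alpha_i,f]$, $\phi=\sum\phi_i$. *)

(* Defs.v *)
From HB Require Import structures.
From mathcomp Require Import all_boot all_order all_algebra.
From mathcomp Require Export complex.
From mathcomp Require Export reals.
Set Implicit Arguments. Unset Strict Implicit. Unset Printing Implicit Defensive.
Import GRing.Theory.
Local Open Scope ring_scope.

(* The fundamental group Gamma = pi_1(P^1 - Q - {c}, b): the free group    *)
(* on alpha_1, ..., alpha_n (here indexed by 'I_n, i.e. 0-based), with     *)
(* delta := (alpha_1 ... alpha_n)^{-1}, so that delta alpha_1...alpha_n=1. *)
(* Elements are freely reduced words; a letter (i, false) is alpha_i and   *)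
(* (i, true) is alpha_i^{-1}.                                              *)

Definition letter (n : nat) := ('I_n * bool)%type.
Definition flipl n (x : letter n) : letter n := (x.1, ~~ x.2).
Definition nocancel n (x y : letter n) := y != flipl x.
Definition reducedw n (w : seq (letter n)) := sorted (@nocancel n) w.

Definition fcons n (x : letter n) (w : seq (letter n)) :=
  if w is y :: w' then (if y == flipl x then w' else x :: w) else [:: x].

Lemma fcons_red n (x : letter n) w : reducedw w -> reducedw (fcons x w).
Proof.
case: w => [|y w] //= H.
case: ifP => Hy; first exact: (path_sorted H).
by rewrite /reducedw /= /nocancel Hy H.
Qed.

Definition fmulw n (u v : seq (letter n)) := foldr (@fcons n) v u.

Lemma fmulw_red n (u v : seq (letter n)) : reducedw v -> reducedw (fmulw u v).
Proof. by elim: u => [|x u IH] //= Hv; apply: fcons_red; apply: IH. Qed.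

Definition FG (n : nat) := {w : seq (letter n) | reducedw w}.

Definition FGmul n (u v : FG n) : FG n :=
  exist _ (fmulw (sval u) (sval v)) (fmulw_red (sval u) (svalP v)).
Definition FGone n : FG n := exist _ [::] (erefl true).
Definition FGgen n (x : letter n) : FG n := exist _ [:: x] (erefl true).
Definition FGinv n (g : FG n) : FG n :=
  foldr (fun x acc => FGmul acc (FGgen (flipl x))) (FGone n) (sval g).

Definition FGextend n (f : letter n -> FG n) (g : FG n) : FG n :=
  foldr (fun x acc => FGmul (f x) acc) (FGone n) (sval g).

Definition alpha n (i : 'I_n) : FG n := FGgen (i, false).
Definition alphaN n (j : nat) : FG n :=
  if (insub j : option 'I_n) is Some i then alpha i else FGone n.

Definition delta n : FG n :=
  FGinv (foldr (fun i acc => FGmul (alpha i) acc) (FGone n) (enum 'I_n)).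

(* deltaN j = delta_{j+1} in the paper: delta_1 = delta,
   delta_{i+1} = alpha_i delta_i alpha_i^{-1}  (0-based: alphaN j = alpha_{j+1}) *)
Fixpoint deltaN n (j : nat) : FG n :=
  if j is j'.+1 then FGmul (FGmul (alphaN n j') (deltaN n j')) (FGinv (alphaN n j'))
  else delta n.

Definition mu n (k : 'I_n) : FG n -> FG n :=
  FGextend (fun x : letter n =>
    let a := if x.1 == k
             then FGmul (FGmul (FGinv (deltaN n k)) (alpha k)) (deltaN n k)
             else alpha x.1 in
    if x.2 then FGinv a else a).

(* rho^beta : Gamma -> GL(V), V = 'cV_m, determined by
   rho^beta(alpha_i) = bH i * A i, where A i = rho(alpha_i). *)
Definition rhob (C : fieldType) n m (A : 'I_n -> 'M[C]_m) (bH : 'I_n -> C)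
  (g : FG n) : 'M[C]_m :=
  foldr (fun x acc =>
     let B := bH x.1 *: A x.1 in (if x.2 then invmx B else B) *m acc)
    1%:M (sval g).

Definition rhoG (C : fieldType) n m (A : 'I_n -> 'M[C]_m) (g : FG n) : 'M[C]_m :=
  rhob A (fun _ => 1) g.

(* C_1 / d C_2 : the span of symbols G[gamma, w], linear in w, subject to  *)
(* G[xi gamma, w] = G[gamma, w] + G[xi, rho^beta(gamma) w]; we describe it *)
(* by its universal property (M, G).                                       *)

Definition C1_rel (C : fieldType) n m (rb : FG n -> 'M[C]_m) (M : lmodType C)
  (G : FG n -> 'cV[C]_m -> M) : Prop :=
  (forall g, linear (G g)) /\
  (forall xi ga w, G (FGmul xi ga) w = G ga w + G xi (rb ga *m w)).

Definition C1_quotient (C : fieldType) n m (rb : FG n -> 'M[C]_m) (M : lmodType C)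
  (G : FG n -> 'cV[C]_m -> M) : Prop :=
  [/\ C1_rel rb G,
      (forall (M' : lmodType C) (G' : FG n -> 'cV[C]_m -> M'), C1_rel rb G' ->
          exists h : M -> M', linear h /\ forall g w, h (G g w) = G' g w)
    & (forall (M' : lmodType C) (h1 h2 : M -> M'), linear h1 -> linear h2 ->
          (forall g w, h1 (G g w) = h2 (G g w)) -> forall x, h1 x = h2 x)].

(* elements of the direct sum of the F_i, F_i = fixed vectors of rho^beta(alpha_i) *)
Definition in_sumF (C : fieldType) n m (rb : FG n -> 'M[C]_m)
  (f : 'I_n -> 'cV[C]_m) : Prop :=
  forall i, rb (alpha i) *m f i = f i.

Definition phi (C : fieldType) n m (M : lmodType C) (G : FG n -> 'cV[C]_m -> M)
  (f : 'I_n -> 'cV[C]_m) : M :=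
  \sum_(i < n) G (alpha i) (f i).

Definition src_act (C : fieldType) n m (k : 'I_n) (chi : C)
  (f : 'I_n -> 'cV[C]_m) : 'I_n -> 'cV[C]_m :=
  fun i => if i == k then chi *: f i else f i.

(* Main.v *)
Require Import Defs.
From HB Require Import structures.
From mathcomp Require Import all_boot all_order all_algebra complex reals.
From Stdlib Require Import FunctionalExtensionality.
Set Implicit Arguments. Unset Strict Implicit. Unset Printing Implicit Defensive.
Import GRing.Theory.
Local Open Scope ring_scope.

Lemma flipK n (x : letter n) : flipl (flipl x) = x.
Proof. by case: x => i b; rewrite /flipl /= negbK. Qed.

Lemma red_tail n (x : letter n) w : reducedw (x :: w) -> reducedw w.
Proof. exact: path_sorted. Qed.

Lemma fconsK n (x : letter n) w : reducedw w -> fcons x (fcons (flipl x) w) = w.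
Proof.
case: w => [|y w] /=; first by rewrite eqxx.
move=> Hw; case: ifP => Hy.
  move/eqP: Hy => Hy; rewrite flipK in Hy; subst y.
  case: w Hw => [|z w] //= /andP [Hz _].
  by rewrite /nocancel in Hz; rewrite (negbTE Hz).
by rewrite /= eqxx.
Qed.

Lemma fmulw_nil n (w : seq (letter n)) : reducedw w -> fmulw w [::] = w.
Proof.
elim: w => [|x w IH] //= Hw; rewrite IH; last exact: red_tail Hw.
case: w Hw {IH} => [|y w] //= /andP [Hy _].
by rewrite /nocancel in Hy; rewrite (negbTE Hy).
Qed.

Lemma FG_eq n (u v : FG n) : sval u = sval v -> u = v.
Proof.
case: u v => [u Hu] [v Hv] /= E; subst v; congr exist; exact: eq_irrelevance.
Qed.

Lemma FGmul1 n (u : FG n) : FGmul u (FGone n) = u.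
Proof. case: u => u Hu; apply: FG_eq => /=; exact: fmulw_nil. Qed.

Definition iw n (w : seq (letter n)) := rev (map (@flipl n) w).

Lemma fmulw_cat n (a b v : seq (letter n)) : fmulw (a ++ b) v = fmulw a (fmulw b v).
Proof. by rewrite /fmulw foldr_cat. Qed.

Lemma fmulw_fcons n x (r v : seq (letter n)) : reducedw r -> reducedw v ->
  fmulw (fcons x r) v = fmulw (x :: r) v.
Proof.
case: r => [|y r] //= Hr Hv; case: ifP => // /eqP ->.
by rewrite fconsK //; apply: fmulw_red.
Qed.

Lemma fmulw_red_l n (a v : seq (letter n)) : reducedw v ->
  fmulw (fmulw a [::]) v = fmulw a v.
Proof.
move=> Hv; elim: a => [|x a IH] //=.
rewrite fmulw_fcons //; last exact: fmulw_red.
by rewrite /= IH.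
Qed.

Lemma FGinv_sval n (g : FG n) : sval (FGinv g) = fmulw (iw (sval g)) [::].
Proof.
rewrite /FGinv; elim: (sval g) => [|x w IH] //=.
rewrite /= in IH.
rewrite IH fmulw_red_l // /iw map_cons rev_cons -cats1 fmulw_cat //.
Qed.

Lemma iwK n (w v : seq (letter n)) : reducedw v -> fmulw (iw w) (fmulw w v) = v.
Proof.
move=> Hv; elim: w => [|x w IH] //=.
rewrite /iw map_cons rev_cons -cats1 fmulw_cat /=.
rewrite -{2}(flipK x) fconsK; first exact: IH.
exact: fmulw_red.
Qed.

Lemma FGinvK n (g : FG n) : FGmul (FGinv g) g = FGone n.
Proof.
apply: FG_eq; rewrite /= FGinv_sval.
case: g => w Hw /=; rewrite fmulw_red_l //.
by rewrite -{2}(fmulw_nil Hw) iwK.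
Qed.


Section Mat.
Variables (K : fieldType) (n m : nat) (A : 'I_n -> 'M[K]_m) (bH : 'I_n -> K).
Hypothesis HU : forall i, bH i *: A i \in unitmx.

Definition Bl (x : letter n) := let B := bH x.1 *: A x.1 in if x.2 then invmx B else B.
Definition rbw (w : seq (letter n)) := foldr (fun x acc => Bl x *m acc) 1%:M w.

Lemma rhob_rbw g : rhob A bH g = rbw (sval g).
Proof. by []. Qed.

Lemma Bl_flip x : Bl x *m Bl (flipl x) = 1%:M.
Proof. by case: x => i [] /=; rewrite /Bl /= ?mulVmx ?mulmxV. Qed.

Lemma rbw_fcons x w : rbw (fcons x w) = Bl x *m rbw w.
Proof.
case: w => [|y w] //=; case: ifP => // /eqP ->.
by rewrite mulmxA Bl_flip mul1mx.
Qed.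

Lemma rbw_fmulw u v : rbw (fmulw u v) = rbw u *m rbw v.
Proof.
elim: u => [|x u IH] /=; first by rewrite mul1mx.
by rewrite rbw_fcons IH mulmxA.
Qed.

Lemma rhob_mul g h : rhob A bH (FGmul g h) = rhob A bH g *m rhob A bH h.
Proof. by rewrite !rhob_rbw /= rbw_fmulw. Qed.

Lemma rhob_one : rhob A bH (FGone n) = 1%:M.
Proof. by []. Qed.

Lemma rhob_invl g : rhob A bH (FGinv g) *m rhob A bH g = 1%:M.
Proof. by rewrite -rhob_mul FGinvK. Qed.

Lemma rhob_invr g : rhob A bH g *m rhob A bH (FGinv g) = 1%:M.
Proof. exact: mulmx1C (rhob_invl g). Qed.

Variable j : 'I_n.
Definition dl (x : letter n) : 'M[K]_m :=
  (x.1 == j)%:R *: (if x.2 then - Bl x else 1%:M).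
Fixpoint Dw (w : seq (letter n)) : 'M[K]_m :=
  if w is x :: w' then Dw w' + dl x *m rbw w' else 0.

Lemma dl_flip x : dl (flipl x) + dl x *m Bl (flipl x) = 0.
Proof.
case: x => i [] /=; rewrite /dl /Bl /=.
  by rewrite -scalemxAl mulNmx mulVmx // scalerN subrr.
by rewrite scalemx1 mul_scalar_mx scalerN addNr.
Qed.

Lemma Dw_fcons x w : Dw (fcons x w) = Dw (x :: w).
Proof.
case: w => [|y w] //=; case: ifP => // /eqP ->.
by rewrite -addrA mulmxA -mulmxDl dl_flip mul0mx addr0.
Qed.

Lemma Dw_fmulw u v : Dw (fmulw u v) = Dw v + Dw u *m rbw v.
Proof.
elim: u => [|x u IH] /=; first by rewrite mul0mx addr0.
by rewrite Dw_fcons /= IH rbw_fmulw mulmxDl addrA mulmxA.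
Qed.

End Mat.

Lemma lin_sum (K : fieldType) (M N : lmodType K) (h : M -> N) :
  linear h -> forall k (F : 'I_k -> M), h (\sum_(i < k) F i) = \sum_(i < k) h (F i).
Proof.
move=> Hl k F.
have hadd : {morph h : x y / x + y}.
  by move=> x y; have := Hl 1 x y; rewrite !scale1r.
have h0 : h 0 = 0.
  have := Hl 1 0 0; rewrite scaler0 addr0 scale1r => /(congr1 (fun z => z - h 0)).
  by rewrite subrr addrK.
exact: (big_morph h hadd h0).
Qed.

Lemma mx_cancel (K : fieldType) m (X Y Z : 'M[K]_m) :
  X *m Y = 1%:M -> Z *m Y = 1%:M -> X = Z.
Proof.
move=> H1 H2; have [_ HY] := mulmx1_unit H1.
by rewrite -[X]mulmx1 -(mulmxV HY) mulmxA H1 -H2 -mulmxA mulmxV // mulmx1.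
Qed.

Definition Pw n (s : seq 'I_n) : FG n := foldr (fun i acc => FGmul (alpha i) acc) (FGone n) s.

Lemma rhob_P (K : fieldType) n m (A : 'I_n -> 'M[K]_m) (bH : 'I_n -> K) :
  (forall i, bH i *: A i \in unitmx) -> (forall i, A i \in unitmx) ->
  forall s, rhob A bH (Pw s) = (\prod_(i <- s) bH i) *: rhoG A (Pw s).
Proof.
move=> HU HA; have HU1 : forall i, (fun _ => (1 : K)) i *: A i \in unitmx.
  by move=> i; rewrite scale1r.
elim=> [|i s IH] /=; first by rewrite big_nil scale1r.
rewrite /rhoG rhob_mul // rhob_mul // -/(rhoG A _) IH big_cons /=.
rewrite -/(rhoG A (Pw s)).
have -> : rhob A bH (alpha i) = bH i *: A i by rewrite /rhob /= mulmx1.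
have -> : rhoG A (alpha i) = A i by rewrite /rhoG /rhob /= mulmx1 scale1r.
by rewrite -scalemxAl -scalemxAr scalerA.
Qed.

Lemma rhob_deltaN (K : fieldType) n m (A : 'I_n -> 'M[K]_m) (bH : 'I_n -> K) (bT : K) :
  (forall i, bH i *: A i \in unitmx) -> (forall i, A i \in unitmx) ->
  rhoG A (delta n) = 1%:M -> bT * \prod_(i < n) bH i = 1 ->
  forall j, rhob A bH (deltaN n j) = bT *: 1%:M.
Proof.
move=> HU HA Hdel Hprod.
have HU1 : forall i, (fun _ => (1 : K)) i *: A i \in unitmx.
  by move=> i; rewrite scale1r.
have HG : rhoG A (Pw (enum 'I_n)) = 1%:M.
  have := rhob_invl HU1 (Pw (enum 'I_n)).
  by rewrite -/(rhoG A _) -/(rhoG A (Pw _)); change (rhoG A (delta n) *m rhoG A (Pw (enum 'I_n)) = 1%:M -> rhoG A (Pw (enum 'I_n)) = 1%:M); rewrite Hdel mul1mx.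
have HP : rhob A bH (Pw (enum 'I_n)) = (\prod_(i < n) bH i) *: 1%:M.
  by rewrite rhob_P // HG big_enum.
elim=> [|j IH] /=.
  apply: (mx_cancel (Y := rhob A bH (Pw (enum 'I_n)))).
    exact: rhob_invl.
  by rewrite HP -scalemxAl mul1mx scalerA Hprod scale1r.
rewrite !rhob_mul // IH -scalemxAr mulmx1 -scalemxAl rhob_invr //.
Qed.

Unset Implicit Arguments.

Theorem lemma4p9 (R : realType) (n m : nat)
  (A : 'I_n -> 'M[R[i]]_m) (bH : 'I_n -> R[i]) (bT : R[i])
  (M : lmodType R[i]) (G : FG n -> 'cV[R[i]]_m -> M) :
  (forall i, A i \in unitmx) ->
  (forall i, diagonalizable (A i)) ->
  rhoG A (delta n) = 1%:M ->
  (forall i, bH i != 0) -> bT != 0 ->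
  bT * \prod_(i < n) bH i = 1 ->
  bT != 1 ->
  C1_quotient (rhob A bH) G ->
  (* phi lands in H_1 = ker d *)
  (forall d : M -> 'cV[R[i]]_m, linear d ->
     (forall g w, d (G g w) = rhob A bH g *m w - w) ->
     forall f, in_sumF (rhob A bH) f -> d (phi G f) = 0)
  /\
  (* equivariance for u_k *)
  (forall (k : 'I_n) (U : M -> M), linear U ->
     (forall g w, U (G g w) = G (mu k g) w) ->
     forall f, in_sumF (rhob A bH) f -> U (phi G f) = phi G (src_act k bT f))
  /\
  (* injectivity *)
  (forall f f', in_sumF (rhob A bH) f -> in_sumF (rhob A bH) f' ->
     phi G f = phi G f' -> f = f').
Proof.
move=> HA _ Hdel HbH HbT Hprod _ [[Glin Grel] Huniv _].
have HU : forall i, bH i *: A i \in unitmx.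
  by move=> i; rewrite unitmxZ ?unitfE.
have G1 : forall w, G (FGone n) w = 0.
  move=> w; have := Grel (FGone n) (FGone n) w.
  rewrite FGmul1 rhob_one mul1mx => /(congr1 (fun z => z - G (FGone n) w)).
  by rewrite subrr addrK.
split.
  move=> d Hd Hdg f Hf; rewrite /phi lin_sum //; apply: big1 => i _.
  by rewrite Hdg Hf subrr.
split.
  move=> k U HUl HUg f Hf; rewrite /phi lin_sum //; apply: eq_bigr => i _.
  rewrite HUg /src_act; case: eqP => [->|Hik].
    have -> : mu k (alpha k) = FGmul (FGmul (FGmul (FGinv (deltaN n k)) (alpha k))
                 (deltaN n k)) (FGone n) by rewrite /mu /FGextend /= eqxx.
    rewrite FGmul1 !Grel (rhob_deltaN HU HA Hdel Hprod) -scalemxAl mul1mx.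
    rewrite -scalemxAr Hf.
    have := Grel (FGinv (deltaN n k)) (deltaN n k) (f k).
    rewrite FGinvK G1 (rhob_deltaN HU HA Hdel Hprod) -scalemxAl mul1mx => E.
    by rewrite addrC -addrA [X in _ + X]addrC -E addr0.
  have -> : mu k (alpha i) = FGmul (alpha i) (FGone n).
    by rewrite /mu /FGextend /=; move/eqP/negbTE: Hik => ->.
  by rewrite FGmul1.
move=> f f' Hf Hf' Heq; apply: functional_extensionality => j.
pose G' (g : FG n) (w : 'cV[R[i]]_m) := Dw A bH j (sval g) *m w.
have C : C1_rel (rhob A bH) G'.
  split.
    by move=> g a u v; rewrite /G' mulmxDr scalemxAr.
  move=> xi ga w; rewrite /G' /FGmul /= Dw_fmulw // mulmxDl -mulmxA.
  by rewrite rhob_rbw.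
have [h [Hh Hhg]] := Huniv _ G' C.
have E : forall f, h (phi G f) = f j.
  move=> g; rewrite /phi lin_sum // (bigD1 j) //= big1 ?addr0.
    by rewrite Hhg /G' /= /dl /= eqxx add0r mulmx1 scale1r mul1mx.
  move=> i Hij; rewrite Hhg /G' /= /dl /= (negbTE Hij) scale0r add0r.
  by rewrite mulmx1 mul0mx.
by rewrite -E Heq E.
Qed.
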